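(* Let $(M,g,h)$ be a $4$-dimensional smooth metric measure spacetime which is a solution of the vacuum weighted Einstein field equations $h\rho-\operatorname{Hes}_h+\Delta h\, g=0$, such that $(M,g)$ is non-flat and is a $pr$-wave with metric $g=2\,du\,dv+F(u,v,x,y)\,dv^2+dx^2+dy^2$ in local coordinates $(u,v,x,y)$. Then the Ricci operator is nilpotent, and the density function $h$ takes the form \[ h(v,x,y)=h_x(v)x+h_y(v)y+h_0(v), \] while $F$ is given by \[ F(u,v,x,y)=F_1(v,x,y)u+F_0(v,x,y), \] for suitable smooth functions $h_x,h_y,h_0,F_1,F_0$.
   Context: A smooth metric measure spacetime is a triple $(M,g,h)$ (shorthand for $(M,g,h\,dvol_g)$) where $(M,g)$ is a Lorentzian manifold and $h$ is a positive smooth function on $M$, assumed non-constant on any open subset (so $\nabla h\neq0$). The weighted Einstein tensor is $G^h=h\rho-\operatorname{Hes}_h+\Delta h\, g$, where $\rho$ is the Ricci tensor, $\operatorname{Hes}_h$ the Hessian and $\Delta h$ the Laplacian of $h$; $(M,g,h)$ is a solution of the vacuum weighted Einstein field equations if $G^h=0$ on $M$. The Ricci operator $\operatorname{Ric}$ is the $(1,1)$-tensor with $g(\operatorname{Ric}X,Y)=\rho(X,Y)$. A $pr$-wave is a Lorentzian manifold admitting a recurrent lightlike vector field $V$ (i.e. $\nabla_XV=\omega(X)V$ for some $1$-form $\omega$) such that $R(V^\perp,V^\perp,\cdot,\cdot)=0$; in dimension $4$ it admits local coordinates $(u,v,x,y)$ with $g=2\,du\,dv+F(u,v,x,y)\,dv^2+dx^2+dy^2$.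 *)

(* Defs.v *)
From Stdlib Require Import Reals Lra Lia List.
From Coquelicot Require Import Coquelicot.
Open Scope R_scope.

(* Points of the coordinate domain in R^4, coordinates (u,v,x,y) = indices 0,1,2,3. *)
Definition pt : Type := (R * R * R * R)%type.

Definition coord (i : nat) (p : pt) : R :=
  match p with (u, v, x, y) =>
    match i with 0%nat => u | 1%nat => v | 2%nat => x | _ => y end end.

Definition upd (i : nat) (p : pt) (t : R) : pt :=
  match p with (u, v, x, y) =>
    match i with
    | 0%nat => (t, v, x, y) | 1%nat => (u, t, x, y)
    | 2%nat => (u, v, t, y) | _ => (u, v, x, t) end end.

Definition partial (i : nat) (f : pt -> R) (p : pt) : R :=
  Derive (fun t => f (upd i p t)) (coord i p).

Definition sum4 (f : nat -> R) : R := f 0%nat + f 1%nat + f 2%nat + f 3%nat.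

Fixpoint dpart (l : list nat) (f : pt -> R) : pt -> R :=
  match l with nil => f | i :: l' => partial i (dpart l' f) end.

Definition box (p : pt) (eps : R) (q : pt) : Prop :=
  forall i, (i < 4)%nat -> Rabs (coord i q - coord i p) < eps.

Definition is_open (U : pt -> Prop) : Prop :=
  forall p, U p -> exists eps, 0 < eps /\ forall q, box p eps q -> U q.

Definition cont_at (f : pt -> R) (p : pt) : Prop :=
  forall eps, 0 < eps -> exists d, 0 < d /\
    forall q, box p d q -> Rabs (f q - f p) < eps.

Definition smooth_on (U : pt -> Prop) (f : pt -> R) : Prop :=
  forall (l : list nat) (p : pt), List.Forall (fun i => (i < 4)%nat) l -> U p ->
    cont_at (dpart l f) p /\
    forall i, (i < 4)%nat -> ex_derive (fun t => dpart l f (upd i p t)) (coord i p).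

(* A metric is given by its components g i j and inverse components gi i j. *)
Definition metric := nat -> nat -> pt -> R.

Definition Gam (g gi : metric) (k i j : nat) (p : pt) : R :=
  / 2 * sum4 (fun l => gi k l p *
     (partial i (g j l) p + partial j (g i l) p - partial l (g i j) p)).

(* R(d_i, d_j) d_k = Riem l i j k * d_l,  R(X,Y)=[nabla_X,nabla_Y]-nabla_[X,Y] *)
Definition Riem (g gi : metric) (l i j k : nat) (p : pt) : R :=
  partial i (Gam g gi l j k) p - partial j (Gam g gi l i k) p
  + sum4 (fun m => Gam g gi l i m p * Gam g gi m j k p
                   - Gam g gi l j m p * Gam g gi m i k p).

Definition ricci (g gi : metric) (j k : nat) (p : pt) : R :=
  sum4 (fun i => Riem g gi i i j k p).

Definition ricci_op (g gi : metric) (k j : nat) (p : pt) : R :=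
  sum4 (fun l => gi k l p * ricci g gi l j p).

Definition hess (g gi : metric) (h : pt -> R) (i j : nat) (p : pt) : R :=
  partial i (partial j h) p - sum4 (fun k => Gam g gi k i j p * partial k h p).

Definition lap (g gi : metric) (h : pt -> R) (p : pt) : R :=
  sum4 (fun i => sum4 (fun j => gi i j p * hess g gi h i j p)).

Definition weinstein (g gi : metric) (h : pt -> R) (i j : nat) (p : pt) : R :=
  h p * ricci g gi i j p - hess g gi h i j p + lap g gi h p * g i j p.

Definition flat_on (g gi : metric) (V : pt -> Prop) : Prop :=
  forall p, V p -> forall l i j k, (l < 4)%nat -> (i < 4)%nat -> (j < 4)%nat -> (k < 4)%nat ->
    Riem g gi l i j k p = 0.

Definition prwave (F : pt -> R) : metric := fun i j p =>
  match i, j with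
  | 0%nat, 1%nat | 1%nat, 0%nat => 1
  | 1%nat, 1%nat => F p
  | 2%nat, 2%nat | 3%nat, 3%nat => 1
  | _, _ => 0 end.

Definition prwave_inv (F : pt -> R) : metric := fun i j p =>
  match i, j with
  | 0%nat, 0%nat => - F p
  | 0%nat, 1%nat | 1%nat, 0%nat => 1
  | 2%nat, 2%nat | 3%nat, 3%nat => 1
  | _, _ => 0 end.

Lemma prwave_inv_correct (F : pt -> R) (p : pt) (i j : nat) :
  (i < 4)%nat -> (j < 4)%nat ->
  sum4 (fun k => prwave F i k p * prwave_inv F k j p) = if Nat.eqb i j then 1 else 0.
Proof.
  intros Hi Hj; unfold sum4, prwave, prwave_inv.
  destruct i as [|[|[|[|i]]]]; try lia;
  destruct j as [|[|[|[|j]]]]; try lia; simpl; ring.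
Qed.

Definition mat := nat -> nat -> R.
Definition mmul (A B : mat) : mat := fun i j => sum4 (fun k => A i k * B k j).
Fixpoint mpow (A : mat) (n : nat) : mat :=
  match n with
  | 0%nat => fun i j => if Nat.eqb i j then 1 else 0
  | S n' => mmul A (mpow A n') end.
Definition nilpotent (A : mat) : Prop :=
  exists n, forall i j, (i < 4)%nat -> (j < 4)%nat -> mpow A n i j = 0.

(* Main.v *)
Require Import Defs.
From Stdlib Require Import Reals List Lra Lia FunctionalExtensionality.
From Coquelicot Require Import Coquelicot.
Open Scope R_scope.

Ltac dpt p := destruct p as [[[?u ?v] ?x] ?y].
Ltac fa := repeat (apply List.Forall_cons; [lia|]); apply List.Forall_nil.
Ltac dnat i := destruct i as [|[|[|[|i]]]]; try lia.

Lemma coord_upd_same i p t : coord i (upd i p t) = t.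
Proof. dpt p; destruct i as [|[|[|[|i]]]]; reflexivity. Qed.

Lemma coord_upd_other i j p t : i <> j -> (i < 4)%nat -> (j < 4)%nat ->
  coord j (upd i p t) = coord j p.
Proof. dpt p; intros; dnat i; dnat j; simpl; try reflexivity; lia. Qed.

Lemma upd_upd_same i p s t : upd i (upd i p s) t = upd i p t.
Proof. dpt p; destruct i as [|[|[|[|i]]]]; reflexivity. Qed.

Lemma upd_coord i p : upd i p (coord i p) = p.
Proof. dpt p; destruct i as [|[|[|[|i]]]]; reflexivity. Qed.

Lemma upd_comm i j p s t : i <> j -> (i < 4)%nat -> (j < 4)%nat ->
  upd i (upd j p t) s = upd j (upd i p s) t.
Proof. dpt p; intros; dnat i; dnat j; simpl; try reflexivity; lia. Qed.

Lemma partial_const i c p : partial i (fun _ => c) p = 0.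
Proof. unfold partial. apply Derive_const. Qed.

Definition Gx (F : pt -> R) (l i j : nat) (p : pt) : R :=
  match l, i, j with
  | 0%nat, 1%nat, 1%nat => /2 * (F p * partial 0%nat F p + partial 1%nat F p)
  | 0%nat, 0%nat, 1%nat | 0%nat, 1%nat, 0%nat => /2 * partial 0%nat F p
  | 0%nat, 1%nat, 2%nat | 0%nat, 2%nat, 1%nat => /2 * partial 2%nat F p
  | 0%nat, 1%nat, 3%nat | 0%nat, 3%nat, 1%nat => /2 * partial 3%nat F p
  | 1%nat, 1%nat, 1%nat => - /2 * partial 0%nat F p
  | 2%nat, 1%nat, 1%nat => - /2 * partial 2%nat F p
  | 3%nat, 1%nat, 1%nat => - /2 * partial 3%nat F p
  | _, _, _ => 0 end.

Lemma Gam_tab F l i j p : (l < 4)%nat -> (i < 4)%nat -> (j < 4)%nat ->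
  Gam (prwave F) (prwave_inv F) l i j p = Gx F l i j p.
Proof.
  intros; unfold Gam, sum4, Gx, prwave, prwave_inv;
  dnat l; dnat i; dnat j; cbv beta iota; rewrite ?partial_const;
  change (fun q : pt => F q) with F; ring.
Qed.

Definition exd (f : pt -> R) i p := ex_derive (fun t => f (upd i p t)) (coord i p).

Lemma pd_scal c f i p : partial i (fun q => c * f q) p = c * partial i f p.
Proof. unfold partial. apply Derive_scal. Qed.
Lemma pd_plus f g i p : exd f i p -> exd g i p ->
  partial i (fun q => f q + g q) p = partial i f p + partial i g p.
Proof. unfold partial, exd. intros. apply Derive_plus; auto. Qed.
Lemma pd_minus f g i p : exd f i p -> exd g i p ->
  partial i (fun q => f q - g q) p = partial i f p - partial i g p.
Proof. unfold partial, exd. intros. apply Derive_minus; auto. Qed.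
Lemma pd_mult f g i p : exd f i p -> exd g i p ->
  partial i (fun q => f q * g q) p = partial i f p * g p + f p * partial i g p.
Proof. unfold partial, exd. intros. rewrite Derive_mult; auto.
  cbv beta; rewrite !upd_coord. ring. Qed.
Lemma exd_plus f g i p : exd f i p -> exd g i p -> exd (fun q => f q + g q) i p.
Proof. unfold exd; intros; exact (ex_derive_plus _ _ _ H H0). Qed.
Lemma exd_mult f g i p : exd f i p -> exd g i p -> exd (fun q => f q * g q) i p.
Proof. unfold exd; intros; apply ex_derive_mult; auto. Qed.

Definition dGx (F : pt -> R) (i l j k : nat) (p : pt) : R :=
  match l, j, k with
  | 0%nat, 1%nat, 1%nat => /2 * (partial i F p * partial 0 F p + F p * partial i (partial 0 F) p
                                 + partial i (partial 1 F) p)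
  | 0%nat, 0%nat, 1%nat | 0%nat, 1%nat, 0%nat => /2 * partial i (partial 0 F) p
  | 0%nat, 1%nat, 2%nat | 0%nat, 2%nat, 1%nat => /2 * partial i (partial 2 F) p
  | 0%nat, 1%nat, 3%nat | 0%nat, 3%nat, 1%nat => /2 * partial i (partial 3 F) p
  | 1%nat, 1%nat, 1%nat => - /2 * partial i (partial 0 F) p
  | 2%nat, 1%nat, 1%nat => - /2 * partial i (partial 2 F) p
  | 3%nat, 1%nat, 1%nat => - /2 * partial i (partial 3 F) p
  | _, _, _ => 0 end.

Lemma dGx_tab F i l j k p : exd F i p -> exd (partial 0 F) i p -> exd (partial 1 F) i p ->
  partial i (Gx F l j k) p = dGx F i l j k p.
Proof.
  intros H0 H1 H2. unfold Gx, dGx.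
  destruct l as [|[|[|[|l]]]]; destruct j as [|[|[|[|j]]]]; destruct k as [|[|[|[|k]]]];
  try apply partial_const; try apply pd_scal.
  rewrite pd_scal, pd_plus, pd_mult; auto. apply exd_mult; auto.
Qed.

Lemma pGam F i l j k p : (l < 4)%nat -> (j < 4)%nat -> (k < 4)%nat ->
  partial i (Gam (prwave F) (prwave_inv F) l j k) p = partial i (Gx F l j k) p.
Proof. intros. unfold partial. apply Derive_ext. intros. apply Gam_tab; auto. Qed.

Definition exF (F : pt -> R) p := forall i, (i < 4)%nat ->
  exd F i p /\ exd (partial 0 F) i p /\ exd (partial 1 F) i p.

Lemma Riem_tab F p : exF F p -> forall l i j k, (l < 4)%nat -> (i < 4)%nat -> (j < 4)%nat -> (k < 4)%nat ->
  Riem (prwave F) (prwave_inv F) l i j k p =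
  dGx F i l j k p - dGx F j l i k p +
  sum4 (fun m => Gx F l i m p * Gx F m j k p - Gx F l j m p * Gx F m i k p).
Proof.
  intros HF l i j k Hl Hi Hj Hk. unfold Riem.
  rewrite !pGam by auto.
  destruct (HF i Hi) as [A [B C]]. destruct (HF j Hj) as [A' [B' C']].
  rewrite !dGx_tab by auto.
  unfold sum4. rewrite !Gam_tab by lia. reflexivity.
Qed.

Definition ricx F p j k := sum4 (fun i => dGx F i i j k p - dGx F j i i k p +
  sum4 (fun m => Gx F i i m p * Gx F m j k p - Gx F i j m p * Gx F m i k p)).

Lemma ricci_tab F p j k : exF F p -> (j < 4)%nat -> (k < 4)%nat ->
  ricci (prwave F) (prwave_inv F) j k p = ricx F p j k.
Proof.
  intros. unfold ricci, ricx, sum4. rewrite !Riem_tab by (auto; lia). reflexivity. Qed.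

Definition hessx F h p i j := partial i (partial j h) p - sum4 (fun k => Gx F k i j p * partial k h p).
Definition lapx F h p := sum4 (fun i => sum4 (fun j => prwave_inv F i j p * hessx F h p i j)).
Definition Wx F h p i j := h p * ricx F p i j - hessx F h p i j + lapx F h p * prwave F i j p.

Lemma hess_tab F h p i j : (i < 4)%nat -> (j < 4)%nat ->
  hess (prwave F) (prwave_inv F) h i j p = hessx F h p i j.
Proof. intros. unfold hess, hessx, sum4. rewrite !Gam_tab by lia. reflexivity. Qed.

Lemma W_tab F h p i j : exF F p -> (i < 4)%nat -> (j < 4)%nat ->
  weinstein (prwave F) (prwave_inv F) h i j p = Wx F h p i j.
Proof. intros. unfold weinstein, Wx, lap, lapx, sum4.
  rewrite !hess_tab by lia. rewrite ricci_tab by auto. reflexivity. Qed.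

Lemma box_refl p e : 0 < e -> box p e p.
Proof. intros He i Hi. unfold Rminus. rewrite Rplus_opp_r, Rabs_R0. exact He. Qed.

Lemma box_upd p e q i t : box p e q -> Rabs (t - coord i p) < e -> (i < 4)%nat ->
  box p e (upd i q t).
Proof. intros Hq Ht Hi j Hj. destruct (Nat.eq_dec i j) as [->|n].
  - rewrite coord_upd_same. exact Ht.
  - rewrite coord_upd_other by auto. apply Hq; auto. Qed.

Lemma box_sub p d e q : box p d q -> d <= e -> box p e q.
Proof. intros H Hd i Hi. specialize (H i Hi). lra. Qed.

Lemma box_open p e : is_open (box p e).
Proof.
  intros q Hq.
  set (m := fun j => e - Rabs (coord j q - coord j p)).
  assert (Hm : forall j, (j < 4)%nat -> 0 < m j) by (intros j Hj; unfold m; specialize (Hq j Hj); lra).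
  exists (Rmin (Rmin (m 0%nat) (m 1%nat)) (Rmin (m 2%nat) (m 3%nat))). split.
  - repeat apply Rmin_pos; apply Hm; lia.
  - intros r Hr j Hj.
    assert (Hle : Rmin (Rmin (m 0%nat) (m 1%nat)) (Rmin (m 2%nat) (m 3%nat)) <= m j).
    { assert (R4 : forall a b c d, Rmin (Rmin a b) (Rmin c d) <= a /\ Rmin (Rmin a b) (Rmin c d) <= b /\
         Rmin (Rmin a b) (Rmin c d) <= c /\ Rmin (Rmin a b) (Rmin c d) <= d).
      { intros. unfold Rmin. repeat destruct Rle_dec; lra. }
      dnat j; apply R4. }
    specialize (Hr j Hj). unfold m in *.
    replace (coord j r - coord j p) with ((coord j r - coord j q) + (coord j q - coord j p)) by ring.
    eapply Rle_lt_trans. apply Rabs_triang. lra.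
Qed.

Lemma locally_upd p e i (P : pt -> Prop) : 0 < e -> (i < 4)%nat ->
  (forall q, box p e q -> P q) -> locally (coord i p) (fun t => P (upd i p t)).
Proof.
  intros He Hi H. exists (mkposreal e He). intros t Ht. apply H.
  apply box_upd; [apply box_refl; auto | exact Ht | auto].
Qed.

Lemma open_box_in (V : pt -> Prop) p : is_open V -> V p -> exists e, 0 < e /\ forall q, box p e q -> V q.
Proof. intros HV Hp. apply HV; auto. Qed.

Lemma loc_partial (V : pt -> Prop) f g i p : is_open V -> V p -> (i < 4)%nat ->
  (forall q, V q -> f q = g q) -> partial i f p = partial i g p.
Proof.
  intros HV Hp Hi H. destruct (HV p Hp) as [e [He Hb]]. unfold partial.
  apply Derive_ext_loc. apply (locally_upd p e i (fun q => f q = g q)); auto.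
Qed.

Lemma loc_zero (V : pt -> Prop) f i p : is_open V -> V p -> (i < 4)%nat ->
  (forall q, V q -> f q = 0) -> partial i f p = 0.
Proof. intros. rewrite (loc_partial V f (fun _ => 0) i p); auto. apply partial_const. Qed.

Lemma dpart_app l l' f : dpart l' (dpart l f) = dpart (l' ++ l) f.
Proof. induction l' as [|i l' IH]; simpl; auto. rewrite IH. reflexivity. Qed.

Lemma smooth_dpart U f l : smooth_on U f -> List.Forall (fun i => (i < 4)%nat) l -> smooth_on U (dpart l f).
Proof. intros H Hl l' p Hl' Hp. rewrite dpart_app. apply H; auto. apply Forall_app; auto. Qed.

Lemma smooth_exd U f i p : smooth_on U f -> U p -> (i < 4)%nat -> exd f i p.
Proof. intros H Hp Hi. apply (H nil p); auto. Qed.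

Lemma smooth_cont U f p : smooth_on U f -> U p -> cont_at f p.
Proof. intros H Hp. apply (H nil p); auto. Qed.

Lemma exF_of U F p : smooth_on U F -> U p -> exF F p.
Proof. intros H Hp i Hi. split; [|split].
  - apply (smooth_exd U F); auto.
  - apply (smooth_exd U (dpart (0%nat :: nil) F)); auto. apply smooth_dpart; auto; fa.
  - apply (smooth_exd U (dpart (1%nat :: nil) F)); auto. apply smooth_dpart; auto; fa.
Qed.

Lemma I1 f i r z : Derive (fun t => f (upd i r t)) z = partial i f (upd i r z).
Proof. unfold partial. rewrite coord_upd_same. apply Derive_ext. intros t. rewrite upd_upd_same. reflexivity. Qed.

Lemma I2 f i r z : exd f i (upd i r z) -> ex_derive (fun t => f (upd i r t)) z.
Proof. unfold exd. rewrite coord_upd_same. apply ex_derive_ext. intros t. rewrite upd_upd_same. reflexivity. Qed.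

Lemma schwarz U f p i j : is_open U -> smooth_on U f -> U p -> (i < 4)%nat -> (j < 4)%nat ->
  partial i (partial j f) p = partial j (partial i f) p.
Proof.
  intros HU Hf Hp Hi Hj. destruct (Nat.eq_dec i j) as [->|nij]; [reflexivity|].
  destruct (HU p Hp) as [e [He Hb]].
  set (f2 := fun z t => f (upd i (upd j p t) z)).
  assert (Hc : forall u v, upd i (upd j p v) u = upd j (upd i p u) v) by (intros; apply upd_comm; auto).
  assert (HA : forall u v, Derive (fun z => Derive (fun t => f2 z t) v) u = partial i (partial j f) (upd i (upd j p v) u)).
  { intros u v. rewrite <- I1. apply Derive_ext. intros z. unfold f2.
    rewrite (Derive_ext _ (fun t => f (upd j (upd i p z) t))) by (intros; rewrite Hc; reflexivity).
    rewrite I1, Hc. reflexivity. }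
  assert (HB : forall u v, Derive (fun z => Derive (fun t => f2 t z) u) v = partial j (partial i f) (upd j (upd i p u) v)).
  { intros u v. rewrite <- I1. apply Derive_ext. intros z. unfold f2.
    rewrite I1, Hc. reflexivity. }
  assert (Hbox : forall u v, Rabs (u - coord i p) < e -> Rabs (v - coord j p) < e -> U (upd i (upd j p v) u)).
  { intros u v Hu Hv. apply Hb. apply box_upd; auto. apply box_upd; auto. apply box_refl; auto. }
  assert (Hsm1 : smooth_on U (partial j f)) by (apply (smooth_dpart U f (j :: nil)); auto; fa).
  assert (Hsm2 : smooth_on U (partial i f)) by (apply (smooth_dpart U f (i :: nil)); auto; fa).
  assert (Hsm3 : smooth_on U (partial i (partial j f))) by (apply (smooth_dpart U f (i :: j :: nil)); auto; fa).
  assert (Hsm4 : smooth_on U (partial j (partial i f))) by (apply (smooth_dpart U f (j :: i :: nil)); auto; fa).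
  pose proof (Schwarz f2 (coord i p) (coord j p)) as S.
  rewrite HA, HB in S. rewrite !upd_coord in S. apply S; clear S.
  - exists (mkposreal e He). intros u v Hu Hv. simpl in Hu, Hv.
    pose proof (Hbox u v Hu Hv) as HU1. pose proof HU1 as HU2. rewrite Hc in HU2.
    unfold f2. split; [|split; [|split]].
    + apply I2. apply (smooth_exd U f); auto.
    + apply (ex_derive_ext (fun z => f (upd j (upd i p u) z))). { intros; rewrite Hc; reflexivity. }
      apply I2. apply (smooth_exd U f); auto.
    + apply (ex_derive_ext (fun z => partial j f (upd i (upd j p v) z))).
      { intros z. rewrite (Derive_ext _ (fun t => f (upd j (upd i p z) t))) by (intros; rewrite Hc; reflexivity).
        rewrite I1, Hc. reflexivity. }
      apply I2. apply (smooth_exd U (partial j f)); auto.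
    + apply (ex_derive_ext (fun z => partial i f (upd j (upd i p u) z))).
      { intros z. rewrite I1, Hc. reflexivity. }
      apply I2. apply (smooth_exd U (partial i f)); auto.
  - intros eps. destruct (smooth_cont U _ p Hsm3 Hp eps (cond_pos eps)) as [d [Hd Hd']].
    exists (mkposreal (Rmin d e) (Rmin_pos _ _ Hd He)). intros u v Hu Hv. simpl in Hu, Hv.
    rewrite !HA, !upd_coord. apply Hd'. apply box_upd; auto.
    + apply box_upd; auto. apply box_refl; auto. eapply Rlt_le_trans; [exact Hv|apply Rmin_l].
    + eapply Rlt_le_trans; [exact Hu|apply Rmin_l].
  - intros eps. destruct (smooth_cont U _ p Hsm4 Hp eps (cond_pos eps)) as [d [Hd Hd']].
    exists (mkposreal (Rmin d e) (Rmin_pos _ _ Hd He)). intros u v Hu Hv. simpl in Hu, Hv.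
    rewrite !HB, !upd_coord. apply Hd'. apply box_upd; auto.
    + apply box_upd; auto. apply box_refl; auto. eapply Rlt_le_trans; [exact Hu|apply Rmin_l].
    + eapply Rlt_le_trans; [exact Hv|apply Rmin_l].
Qed.

Lemma alg_facts F h p : exF F p -> (forall i j, (i<4)%nat -> (j<4)%nat -> Wx F h p i j = 0) ->
 partial 0 (partial 0 h) p = 0 /\
 partial 0 (partial 2 h) p = 0 /\ partial 2 (partial 0 h) p = 0 /\
 partial 0 (partial 3 h) p = 0 /\ partial 3 (partial 0 h) p = 0 /\
 partial 2 (partial 3 h) p = 0 /\ partial 3 (partial 2 h) p = 0 /\
 partial 2 (partial 2 h) p = partial 0 F p * partial 0 h p - 2 * partial 1 (partial 0 h) p /\
 partial 3 (partial 3 h) p = partial 0 F p * partial 0 h p - 2 * partial 1 (partial 0 h) p /\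
 h p * partial 0 (partial 0 F) p = 6 * partial 1 (partial 0 h) p - 3 * partial 0 F p * partial 0 h p /\
 partial 1 (partial 2 h) p = /2 * (h p * partial 0 (partial 2 F) p + partial 2 F p * partial 0 h p) /\
 partial 1 (partial 3 h) p = /2 * (h p * partial 0 (partial 3 F) p + partial 3 F p * partial 0 h p).
Proof. intros H W.
 pose proof (W 0%nat 0%nat ltac:(lia) ltac:(lia)) as E00.
 pose proof (W 0%nat 1%nat ltac:(lia) ltac:(lia)) as E01.
 pose proof (W 1%nat 0%nat ltac:(lia) ltac:(lia)) as E10.
 pose proof (W 0%nat 2%nat ltac:(lia) ltac:(lia)) as E02.
 pose proof (W 2%nat 0%nat ltac:(lia) ltac:(lia)) as E20.
 pose proof (W 0%nat 3%nat ltac:(lia) ltac:(lia)) as E03.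
 pose proof (W 3%nat 0%nat ltac:(lia) ltac:(lia)) as E30.
 pose proof (W 2%nat 2%nat ltac:(lia) ltac:(lia)) as E22.
 pose proof (W 3%nat 3%nat ltac:(lia) ltac:(lia)) as E33.
 pose proof (W 2%nat 3%nat ltac:(lia) ltac:(lia)) as E23.
 pose proof (W 3%nat 2%nat ltac:(lia) ltac:(lia)) as E32.
 pose proof (W 1%nat 2%nat ltac:(lia) ltac:(lia)) as E12.
 pose proof (W 1%nat 3%nat ltac:(lia) ltac:(lia)) as E13.
 clear W.
 unfold Wx, lapx, hessx, ricx, sum4, dGx, Gx, prwave, prwave_inv in *; simpl in *.
 assert (h00 : partial 0 (partial 0 h) p = 0) by lra.
 rewrite h00 in *.
 ring_simplify in E01. ring_simplify in E10. ring_simplify in E22. ring_simplify in E33.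
 ring_simplify in E12. ring_simplify in E13.
 repeat split; try lra.
Qed.

Lemma flat_pt F p : exF F p ->
  partial 0 (partial 0 F) p = 0 -> partial 0 (partial 2 F) p = 0 -> partial 2 (partial 0 F) p = 0 ->
  partial 0 (partial 3 F) p = 0 -> partial 3 (partial 0 F) p = 0 ->
  partial 2 (partial 2 F) p = 0 -> partial 2 (partial 3 F) p = 0 -> partial 3 (partial 2 F) p = 0 ->
  partial 3 (partial 3 F) p = 0 ->
  partial 1 (partial 0 F) p = partial 0 (partial 1 F) p ->
  partial 2 (partial 1 F) p = partial 1 (partial 2 F) p ->
  partial 3 (partial 1 F) p = partial 1 (partial 3 F) p ->
  forall l i j k, (l < 4)%nat -> (i < 4)%nat -> (j < 4)%nat -> (k < 4)%nat ->
  Riem (prwave F) (prwave_inv F) l i j k p = 0.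
Proof.
  intros HF H00 H02 H20 H03 H30 H22 H23 H32 H33 S10 S21 S31 l i j k Hl Hi Hj Hk.
  rewrite Riem_tab by auto. unfold dGx, Gx, sum4.
  dnat l; dnat i; dnat j; dnat k; cbv beta iota;
  rewrite ?H00, ?H02, ?H20, ?H03, ?H30, ?H22, ?H23, ?H32, ?H33, ?S10, ?S21, ?S31; field.
Qed.

Lemma ricop_zero F p : exF F p -> partial 0 (partial 0 F) p = 0 ->
  forall i j, (i < 4)%nat -> (j < 4)%nat -> (i = 1 \/ j = 0 \/ (2 <= i /\ 2 <= j))%nat ->
  ricci_op (prwave F) (prwave_inv F) i j p = 0.
Proof.
  intros HF H00 i j Hi Hj C.
  unfold ricci_op, sum4. rewrite !ricci_tab by (auto; lia).
  unfold ricx, dGx, Gx, sum4, prwave_inv.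
  dnat i; dnat j; try lia; cbv beta iota; rewrite ?H00; field.
Qed.

Lemma nil_pt F p : exF F p -> partial 0 (partial 0 F) p = 0 ->
  nilpotent (fun i j => ricci_op (prwave F) (prwave_inv F) i j p).
Proof.
  intros HF H00. exists 3%nat. intros i j Hi Hj.
  pose proof (ricop_zero F p HF H00) as Z.
  assert (Z00 := Z 0%nat 0%nat ltac:(lia) ltac:(lia) ltac:(lia)).
  assert (Z10 := Z 1%nat 0%nat ltac:(lia) ltac:(lia) ltac:(lia)).
  assert (Z11 := Z 1%nat 1%nat ltac:(lia) ltac:(lia) ltac:(lia)).
  assert (Z12 := Z 1%nat 2%nat ltac:(lia) ltac:(lia) ltac:(lia)).
  assert (Z13 := Z 1%nat 3%nat ltac:(lia) ltac:(lia) ltac:(lia)).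
  assert (Z20 := Z 2%nat 0%nat ltac:(lia) ltac:(lia) ltac:(lia)).
  assert (Z30 := Z 3%nat 0%nat ltac:(lia) ltac:(lia) ltac:(lia)).
  assert (Z22 := Z 2%nat 2%nat ltac:(lia) ltac:(lia) ltac:(lia)).
  assert (Z23 := Z 2%nat 3%nat ltac:(lia) ltac:(lia) ltac:(lia)).
  assert (Z32 := Z 3%nat 2%nat ltac:(lia) ltac:(lia) ltac:(lia)).
  assert (Z33 := Z 3%nat 3%nat ltac:(lia) ltac:(lia) ltac:(lia)).
  clear Z. unfold mpow, mmul, sum4.
  dnat i; dnat j; cbv beta iota; simpl Nat.eqb; cbv beta iota;
  rewrite ?Z00, ?Z10, ?Z11, ?Z12, ?Z13, ?Z20, ?Z30, ?Z22, ?Z23, ?Z32, ?Z33; ring.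
Qed.

Lemma exd_d U f l i p : smooth_on U f -> List.Forall (fun i => (i < 4)%nat) l -> U p -> (i < 4)%nat ->
  exd (dpart l f) i p.
Proof. intros. apply (smooth_exd U); auto. apply smooth_dpart; auto. Qed.

Lemma exd_scal c f i p : exd f i p -> exd (fun q => c * f q) i p.
Proof. unfold exd; intros; apply ex_derive_scal; auto. Qed.

Record Hyp (U : pt -> Prop) (F h : pt -> R) : Prop := mkHyp {
  hU : is_open U; hF : smooth_on U F; hh : smooth_on U h; hpos : forall p, U p -> 0 < h p;
  hW : forall p, U p -> forall i j, (i < 4)%nat -> (j < 4)%nat ->
     weinstein (prwave F) (prwave_inv F) h i j p = 0 }.

Lemma facts U F h p : Hyp U F h -> U p ->
 partial 0 (partial 0 h) p = 0 /\
 partial 0 (partial 2 h) p = 0 /\ partial 2 (partial 0 h) p = 0 /\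
 partial 0 (partial 3 h) p = 0 /\ partial 3 (partial 0 h) p = 0 /\
 partial 2 (partial 3 h) p = 0 /\ partial 3 (partial 2 h) p = 0 /\
 partial 2 (partial 2 h) p = partial 0 F p * partial 0 h p - 2 * partial 1 (partial 0 h) p /\
 partial 3 (partial 3 h) p = partial 0 F p * partial 0 h p - 2 * partial 1 (partial 0 h) p /\
 h p * partial 0 (partial 0 F) p = 6 * partial 1 (partial 0 h) p - 3 * partial 0 F p * partial 0 h p /\
 partial 1 (partial 2 h) p = /2 * (h p * partial 0 (partial 2 F) p + partial 2 F p * partial 0 h p) /\
 partial 1 (partial 3 h) p = /2 * (h p * partial 0 (partial 3 F) p + partial 3 F p * partial 0 h p).
Proof.
  intros [HU HF Hh Hpos HW] Hp. assert (E := exF_of U F p HF Hp).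
  apply alg_facts; auto. intros i j Hi Hj. rewrite <- W_tab by auto. apply HW; auto.
Qed.

Ltac ex U f l := apply (exd_d U f l); [assumption|fa|assumption|lia].

Lemma smd U f l : smooth_on U f -> List.Forall (fun i => (i < 4)%nat) l -> smooth_on U (dpart l f).
Proof. apply smooth_dpart. Qed.

Lemma step2 U F h p : Hyp U F h -> U p -> partial 0 (partial 0 F) p * partial 0 h p = 0.
Proof.
  intros HY Hp. pose proof HY as [HU HF Hh Hpos HW].
  assert (S2 : smooth_on U (partial 2 h)) by (apply (smd U h (2::nil)%nat); auto; fa).
  assert (S0 : smooth_on U (partial 0 h)) by (apply (smd U h (0::nil)%nat); auto; fa).
  assert (Fa : forall q, U q -> partial 2 (partial 2 h) q =
     partial 0 F q * partial 0 h q - 2 * partial 1 (partial 0 h) q) by (intros q Hq; apply (facts U F h q HY Hq)).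
  pose proof (loc_partial U _ _ 0 p HU Hp ltac:(lia) Fa) as E.
  rewrite (schwarz U (partial 2 h) p 0 2 HU S2 Hp ltac:(lia) ltac:(lia)) in E.
  rewrite (loc_zero U (partial 0 (partial 2 h)) 2 p HU Hp ltac:(lia)
    ltac:(intros q Hq; apply (facts U F h q HY Hq))) in E.
  rewrite pd_minus, pd_mult, pd_scal in E.
  2: ex U F (0::nil)%nat. 2: ex U h (0::nil)%nat.
  2: { apply exd_mult; [ex U F (0::nil)%nat | ex U h (0::nil)%nat]. }
  2: { apply exd_scal. ex U h (1::0::nil)%nat. }
  rewrite (schwarz U (partial 0 h) p 0 1 HU S0 Hp ltac:(lia) ltac:(lia)) in E.
  rewrite (loc_zero U (partial 0 (partial 0 h)) 1 p HU Hp ltac:(lia)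
    ltac:(intros q Hq; apply (facts U F h q HY Hq))) in E.
  destruct (facts U F h p HY Hp) as [h00 _]. rewrite h00 in E. lra.
Qed.


Lemma step3 U F h p : Hyp U F h -> U p -> partial 0 (partial 0 F) p = 0.
Proof.
  intros HY Hp. pose proof HY as [HU HF Hh Hpos HW].
  destruct (Req_dec (partial 0 (partial 0 F) p) 0) as [E|Hne]; auto. exfalso.
  assert (Sc : smooth_on U (partial 0 (partial 0 F))) by (apply (smd U F (0::0::nil)%nat); auto; fa).
  destruct (smooth_cont U _ p Sc Hp (Rabs (partial 0 (partial 0 F) p)) ltac:(apply Rabs_pos_lt; auto))
    as [d [Hd Hd']].
  destruct (HU p Hp) as [e [He Hb]].
  set (V := box p (Rmin d e)).
  assert (HV : forall q, V q -> U q /\ partial 0 (partial 0 F) q <> 0).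
  { intros q Hq. split.
    - apply Hb. apply (box_sub p (Rmin d e)); auto. apply Rmin_r.
    - intros Z. assert (B : box p d q) by (apply (box_sub p (Rmin d e)); auto; apply Rmin_l).
      specialize (Hd' q B). rewrite Z in Hd'. rewrite Rminus_0_l, Rabs_Ropp in Hd'. lra. }
  assert (Ha : forall q, V q -> partial 0 h q = 0).
  { intros q Hq. destruct (HV q Hq) as [HUq Hn].
    pose proof (step2 U F h q HY HUq) as S. apply Rmult_integral in S. destruct S; auto. contradiction. }
  assert (HVp : V p) by (apply box_refl; apply Rmin_pos; auto).
  pose proof (loc_zero V (partial 0 h) 1 p (box_open _ _) HVp ltac:(lia) Ha) as H10.
  pose proof (Ha p HVp) as H0.
  destruct (facts U F h p HY Hp) as [_ [_ [_ [_ [_ [_ [_ [_ [_ [E _]]]]]]]]]].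
  rewrite H10, H0 in E. specialize (Hpos p Hp).
  assert (h p * partial 0 (partial 0 F) p = 0) by lra.
  apply Rmult_integral in H. destruct H; lra.
Qed.

Lemma step4 U F h p : Hyp U F h -> U p ->
  partial 1 (partial 0 h) p = /2 * (partial 0 F p * partial 0 h p) /\
  partial 2 (partial 2 h) p = 0 /\ partial 3 (partial 3 h) p = 0.
Proof.
  intros HY Hp. pose proof (step3 U F h p HY Hp) as F00.
  destruct (facts U F h p HY Hp) as [_ [_ [_ [_ [_ [_ [_ [E22 [E33 [E _]]]]]]]]]].
  rewrite F00 in E. split; [|split]; lra.
Qed.

Lemma hmk U F h q m k : Hyp U F h -> U q -> (m = 2 \/ m = 3)%nat -> (k = 2 \/ k = 3)%nat ->
  partial m (partial k h) q = 0.
Proof.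
  intros HY Hq Hm Hk. destruct (facts U F h q HY Hq) as [_ [_ [_ [_ [_ [H23 [H32 _]]]]]]].
  destruct (step4 U F h q HY Hq) as [_ [H22 H33]].
  destruct Hm as [->| ->]; destruct Hk as [->| ->]; auto.
Qed.

Lemma hm0 U F h q m : Hyp U F h -> U q -> (m = 2 \/ m = 3)%nat -> partial m (partial 0 h) q = 0.
Proof.
  intros HY Hq Hm. destruct (facts U F h q HY Hq) as [_ [_ [H20 [_ [H30 _]]]]].
  destruct Hm as [->| ->]; auto.
Qed.

Lemma drel (W : pt -> Prop) f g1 g2 m q : is_open W -> W q -> (m < 4)%nat ->
  (forall r, W r -> f r = /2 * (g1 r * g2 r)) -> exd g1 m q -> exd g2 m q ->
  partial m f q = /2 * (partial m g1 q * g2 q + g1 q * partial m g2 q).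
Proof.
  intros HW Hq Hm E E1 E2. rewrite (loc_partial W f (fun r => /2 * (g1 r * g2 r)) m q); auto.
  rewrite pd_scal, pd_mult; auto.
Qed.

Lemma step5a U F h q m : Hyp U F h -> U q -> partial 0 h q <> 0 -> (m = 2 \/ m = 3)%nat ->
  partial m (partial 0 F) q = 0.
Proof.
  intros HY Hq Ha Hm. pose proof HY as [HU HF Hh Hpos HW].
  assert (Hm4 : (m < 4)%nat) by lia.
  assert (S0 : smooth_on U (partial 0 h)) by (apply (smd U h (0::nil)%nat); auto; fa).
  pose proof (drel U (partial 1 (partial 0 h)) (partial 0 F) (partial 0 h) m q HU Hq Hm4
    ltac:(intros r Hr; apply (step4 U F h r HY Hr))) as E.
  rewrite (hm0 U F h q m HY Hq Hm) in E.
  rewrite (schwarz U (partial 0 h) q m 1 HU S0 Hq Hm4 ltac:(lia)) in E.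
  rewrite (loc_zero U (partial m (partial 0 h)) 1 q HU Hq ltac:(lia)
     ltac:(intros r Hr; apply (hm0 U F h r m HY Hr Hm))) in E.
  assert (E' : partial m (partial 0 F) q * partial 0 h q = 0).
  { assert (T: E = E) by reflexivity. clear T.
    apply (Rmult_eq_reg_l (/2)); [|lra]. rewrite Rmult_0_r. rewrite E. 
    - ring.
    - ex U F (0::nil)%nat.
    - ex U h (0::nil)%nat. }
  apply Rmult_integral in E'. destruct E'; auto. contradiction.
Qed.

Lemma step5b U F h (W : pt -> Prop) q m k : Hyp U F h -> is_open W -> (forall r, W r -> U r) ->
  (forall r, W r -> partial 0 h r <> 0) -> W q -> (m = 2 \/ m = 3)%nat -> (k = 2 \/ k = 3)%nat ->
  partial m (partial k F) q = 0.
Proof.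
  intros HY HWo HWU Ha Hq Hm Hk. pose proof HY as [HU HF Hh Hpos HW].
  assert (Hm4 : (m < 4)%nat) by lia. assert (Hk4 : (k < 4)%nat) by lia.
  assert (Sk : smooth_on U (partial k h)) by (apply (smd U h (k::nil)%nat); auto; fa).
  assert (Rel : forall r, W r -> partial 1 (partial k h) r = /2 * (partial k F r * partial 0 h r)).
  { intros r Hr. pose proof (HWU r Hr) as HUr.
    assert (Z : partial 0 (partial k F) r = 0).
    { rewrite (schwarz U F r 0 k HU HF HUr ltac:(lia) Hk4). apply (step5a U F h r k HY HUr (Ha r Hr) Hk). }
    destruct (facts U F h r HY HUr) as [_ [_ [_ [_ [_ [_ [_ [_ [_ [_ [E2 E3]]]]]]]]]]].
    destruct Hk as [-> | ->]; [rewrite E2 | rewrite E3]; rewrite Z; ring. }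
  pose proof (HWU q Hq) as HUq.
  pose proof (drel W _ _ _ m q HWo Hq Hm4 Rel) as E.
  rewrite (hm0 U F h q m HY HUq Hm) in E.
  rewrite (schwarz U (partial k h) q m 1 HU Sk HUq Hm4 ltac:(lia)) in E.
  rewrite (loc_zero U (partial m (partial k h)) 1 q HU HUq ltac:(lia)
     ltac:(intros r Hr; apply (hmk U F h r m k HY Hr Hm Hk))) in E.
  assert (E' : partial m (partial k F) q * partial 0 h q = 0).
  { apply (Rmult_eq_reg_l (/2)); [|lra]. rewrite Rmult_0_r. rewrite E.
    - ring.
    - apply (exd_d U F (k::nil)%nat); auto; fa.
    - ex U h (0::nil)%nat. }
  apply Rmult_integral in E'. destruct E'; auto. exfalso. apply (Ha q Hq); auto.
Qed.

Lemma step5 U F h p : Hyp U F h ->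
  (forall V : pt -> Prop, is_open V -> (exists p, V p) -> (forall p, V p -> U p) ->
     ~ flat_on (prwave F) (prwave_inv F) V) ->
  U p -> partial 0 h p = 0.
Proof.
  intros HY NF Hp. pose proof HY as [HU HF Hh Hpos HW].
  destruct (Req_dec (partial 0 h p) 0) as [E|Hne]; auto. exfalso.
  assert (Sc : smooth_on U (partial 0 h)) by (apply (smd U h (0::nil)%nat); auto; fa).
  destruct (smooth_cont U _ p Sc Hp (Rabs (partial 0 h p)) ltac:(apply Rabs_pos_lt; auto))
    as [d [Hd Hd']].
  destruct (HU p Hp) as [e [He Hb]].
  set (V := box p (Rmin d e)).
  assert (HVU : forall q, V q -> U q).
  { intros q Hq. apply Hb. apply (box_sub p (Rmin d e)); auto. apply Rmin_r. }
  assert (HVa : forall q, V q -> partial 0 h q <> 0).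
  { intros q Hq Z. assert (B : box p d q) by (apply (box_sub p (Rmin d e)); auto; apply Rmin_l).
    specialize (Hd' q B). rewrite Z in Hd'. rewrite Rminus_0_l, Rabs_Ropp in Hd'. lra. }
  assert (HVo : is_open V) by apply box_open.
  apply (NF V HVo).
  - exists p. apply box_refl. apply Rmin_pos; auto.
  - exact HVU.
  - intros q Hq. pose proof (HVU q Hq) as HUq.
    apply flat_pt.
    + apply (exF_of U); auto.
    + apply (step3 U F h q HY HUq).
    + rewrite (schwarz U F q 0 2 HU HF HUq ltac:(lia) ltac:(lia)).
      apply (step5a U F h q 2 HY HUq (HVa q Hq)); lia.
    + apply (step5a U F h q 2 HY HUq (HVa q Hq)); lia.
    + rewrite (schwarz U F q 0 3 HU HF HUq ltac:(lia) ltac:(lia)).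
      apply (step5a U F h q 3 HY HUq (HVa q Hq)); lia.
    + apply (step5a U F h q 3 HY HUq (HVa q Hq)); lia.
    + apply (step5b U F h V q 2 2 HY HVo HVU HVa Hq); lia.
    + apply (step5b U F h V q 2 3 HY HVo HVU HVa Hq); lia.
    + apply (step5b U F h V q 3 2 HY HVo HVU HVa Hq); lia.
    + apply (step5b U F h V q 3 3 HY HVo HVU HVa Hq); lia.
    + apply (schwarz U F q 1 0 HU HF HUq); lia.
    + apply (schwarz U F q 2 1 HU HF HUq); lia.
    + apply (schwarz U F q 3 1 HU HF HUq); lia.
Qed.

Lemma line p e f i q t c : (i < 4)%nat -> box p e q -> Rabs (t - coord i p) < e ->
  (forall s, Rabs (s - coord i p) < e -> exd f i (upd i q s) /\ partial i f (upd i q s) = c) ->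
  f (upd i q t) = f q + c * (t - coord i q).
Proof.
  intros Hi Hq Ht H.
  set (g := fun s => f (upd i q s) - c * s).
  assert (Hin : forall s, Rmin (coord i q) t <= s <= Rmax (coord i q) t -> Rabs (s - coord i p) < e).
  { intros s Hs. pose proof (Hq i Hi) as Hqi. apply Rabs_def2 in Hqi. apply Rabs_def2 in Ht.
    apply Rabs_def1; unfold Rmin, Rmax in Hs; destruct Rle_dec; lra. }
  assert (Hd : forall s, Rabs (s - coord i p) < e -> is_derive g s 0).
  { intros s Hs. destruct (H s Hs) as [E1 E2].
    assert (X1 : ex_derive (fun t => f (upd i q t)) s) by (apply I2; auto).
    assert (X2 : ex_derive (fun t => c * t) s) by (apply ex_derive_scal; apply ex_derive_id).
    assert (X : ex_derive g s) by exact (ex_derive_minus _ _ _ X1 X2).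
    pose proof (Derive_correct _ _ X) as D.
    replace (Derive g s) with 0 in D; auto. unfold g. rewrite Derive_minus; auto.
    rewrite I1, E2, Derive_scal, Derive_id. ring. }
  destruct (MVT_gen g (coord i q) t (fun _ => 0)) as [x [_ Hx]].
  - intros s Hs. apply Hd. apply Hin. lra.
  - intros s Hs. apply continuity_pt_filterlim.
    exact (ex_derive_continuous g s (ex_intro _ 0 (Hd s (Hin s ltac:(lra))))).
  - unfold g in Hx. rewrite upd_coord in Hx. lra.
Qed.

Definition proj (k : nat -> bool) (p q : pt) : pt :=
  (if k 0%nat then coord 0 q else coord 0 p, if k 1%nat then coord 1 q else coord 1 p,
   if k 2%nat then coord 2 q else coord 2 p, if k 3%nat then coord 3 q else coord 3 p).

Lemma coord_proj k p q i : (i < 4)%nat -> coord i (proj k p q) = if k i then coord i q else coord i p.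
Proof. intros; dnat i; reflexivity. Qed.

Lemma proj_upd k p q i t : (i < 4)%nat ->
  proj k p (upd i q t) = if k i then upd i (proj k p q) t else proj k p q.
Proof.
  intros Hi. dpt q. unfold proj.
  dnat i; simpl; destruct (k 0%nat), (k 1%nat), (k 2%nat), (k 3%nat); reflexivity.
Qed.

Lemma dpart_proj k p f l : List.Forall (fun i => (i < 4)%nat) l -> forall q,
  dpart l (fun r => f (proj k p r)) q = if forallb k l then dpart l f (proj k p q) else 0.
Proof.
  induction l as [|i l IH]; intros Hl q; simpl; auto.
  inversion Hl as [|? ? Hi Hl']; subst.
  unfold partial. rewrite (Derive_ext _ (fun t => if forallb k l then dpart l f (proj k p (upd i q t)) else 0))
    by (intros; apply IH; auto).
  destruct (forallb k l).
  - rewrite (Derive_ext _ (fun t => if k i then dpart l f (upd i (proj k p q) t) else dpart l f (proj k p q)))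
      by (intros; rewrite proj_upd by auto; destruct (k i); reflexivity).
    rewrite coord_proj by auto. destruct (k i); simpl.
    + reflexivity.
    + apply Derive_const.
  - rewrite Derive_const. destruct (k i); reflexivity.
Qed.

Lemma proj_box k p e q : 0 < e -> box p e q -> box p e (proj k p q).
Proof.
  intros He Hq j Hj. rewrite coord_proj by auto. destruct (k j).
  - apply Hq; auto.
  - unfold Rminus. rewrite Rplus_opp_r, Rabs_R0. auto.
Qed.

Lemma smooth_proj (U B : pt -> Prop) f k p : smooth_on U f -> (forall q, B q -> U (proj k p q)) ->
  smooth_on B (fun r => f (proj k p r)).
Proof.
  intros Hf HB l q Hl Hq. split.
  - intros eps Heps. destruct (forallb k l) eqn:Eb.
    + destruct (proj1 (Hf l (proj k p q) Hl (HB q Hq)) eps Heps) as [d [Hd Hd']].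
      exists d. split; auto. intros q' Hq'. rewrite !dpart_proj, Eb by auto. apply Hd'.
      intros j Hj. rewrite !coord_proj by auto. destruct (k j).
      * apply Hq'; auto.
      * unfold Rminus. rewrite Rplus_opp_r, Rabs_R0. auto.
    + exists 1. split; [lra|]. intros q' _. rewrite !dpart_proj, Eb by auto.
      unfold Rminus. rewrite Rplus_opp_r, Rabs_R0. auto.
  - intros i Hi.
    apply (ex_derive_ext (fun t => if forallb k l then dpart l f (proj k p (upd i q t)) else 0)).
    { intros; rewrite dpart_proj; auto. }
    destruct (forallb k l).
    + apply (ex_derive_ext (fun t => if k i then dpart l f (upd i (proj k p q) t) else dpart l f (proj k p q))).
      { intros; rewrite proj_upd by auto; destruct (k i); reflexivity. }
      destruct (k i) eqn:Ki.
      * pose proof (proj2 (Hf l (proj k p q) Hl (HB q Hq)) i Hi) as X.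
        rewrite coord_proj, Ki in X by auto. exact X.
      * apply ex_derive_const.
    + apply ex_derive_const.
Qed.

Lemma smooth_ext (B : pt -> Prop) f g : (forall q, f q = g q) -> smooth_on B f -> smooth_on B g.
Proof. intros E H. assert (f = g) by (apply functional_extensionality; auto). subst; auto. Qed.

Lemma dpart_lin (B : pt -> Prop) f g c : is_open B -> smooth_on B f -> smooth_on B g ->
  forall l, List.Forall (fun i => (i < 4)%nat) l -> forall q, B q ->
  dpart l (fun r => f r + c * g r) q = dpart l f q + c * dpart l g q.
Proof.
  intros HB Hf Hg l. induction l as [|i l IH]; intros Hl q Hq; simpl; auto.
  inversion Hl as [|? ? Hi Hl']; subst.
  rewrite (loc_partial B _ (fun r => dpart l f r + c * dpart l g r) i q HB Hq Hi) by (intros; apply IH; auto).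
  rewrite pd_plus, pd_scal; auto.
  - apply (proj2 (Hf l q Hl' Hq)); auto.
  - apply exd_scal. apply (proj2 (Hg l q Hl' Hq)); auto.
Qed.

Lemma smooth_lin (B : pt -> Prop) f g c : is_open B -> smooth_on B f -> smooth_on B g ->
  smooth_on B (fun r => f r + c * g r).
Proof.
  intros HB Hf Hg l q Hl Hq. split.
  - intros eps Heps.
    destruct (proj1 (Hf l q Hl Hq) (eps/2) ltac:(lra)) as [d1 [Hd1 Hd1']].
    assert (Hc : 0 < 2 * (Rabs c + 1)) by (pose proof (Rabs_pos c); lra).
    destruct (proj1 (Hg l q Hl Hq) (eps / (2 * (Rabs c + 1))) ltac:(apply Rdiv_lt_0_compat; lra)) as [d2 [Hd2 Hd2']].
    destruct (HB q Hq) as [e [He Hb]].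
    exists (Rmin (Rmin d1 d2) e). split; [repeat apply Rmin_pos; auto|].
    intros q' Hq'.
    assert (B1 : box q d1 q') by (apply (box_sub q (Rmin (Rmin d1 d2) e)); auto;
      eapply Rle_trans; [apply Rmin_l|apply Rmin_l]).
    assert (B2 : box q d2 q') by (apply (box_sub q (Rmin (Rmin d1 d2) e)); auto;
      eapply Rle_trans; [apply Rmin_l|apply Rmin_r]).
    assert (B3 : B q') by (apply Hb; apply (box_sub q (Rmin (Rmin d1 d2) e)); auto; apply Rmin_r).
    rewrite !(dpart_lin B f g c HB Hf Hg l Hl) by auto.
    specialize (Hd1' q' B1). specialize (Hd2' q' B2).
    replace (dpart l f q' + c * dpart l g q' - (dpart l f q + c * dpart l g q))
      with ((dpart l f q' - dpart l f q) + c * (dpart l g q' - dpart l g q)) by ring.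
    eapply Rle_lt_trans; [apply Rabs_triang|]. rewrite Rabs_mult.
    assert (Rabs c * Rabs (dpart l g q' - dpart l g q) <= Rabs c * (eps / (2 * (Rabs c + 1)))).
    { apply Rmult_le_compat_l; [apply Rabs_pos| lra]. }
    assert (Rabs c * (eps / (2 * (Rabs c + 1))) < eps / 2).
    { unfold Rdiv. rewrite Rinv_mult. pose proof (Rabs_pos c).
      assert (0 < / (Rabs c + 1)) by (apply Rinv_0_lt_compat; lra).
      assert (Rabs c * / (Rabs c + 1) < 1).
      { apply (Rmult_lt_reg_r (Rabs c + 1)); [lra|]. rewrite Rmult_assoc, Rinv_l by lra. lra. }
      replace (Rabs c * (eps * (/ 2 * / (Rabs c + 1)))) with ((Rabs c * / (Rabs c + 1)) * (eps / 2)) by (unfold Rdiv; ring).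
      assert (0 < eps / 2) by lra. nra. }
    lra.
  - intros i Hi. destruct (HB q Hq) as [e [He Hb]].
    apply (ex_derive_ext_loc (K := R_AbsRing) (V := R_NormedModule)
             (fun t => dpart l f (upd i q t) + c * dpart l g (upd i q t))).
    + apply (locally_upd q e i (fun r => dpart l f r + c * dpart l g r = dpart l (fun r => f r + c * g r) r)); auto.
      intros r Hr. symmetry. apply (dpart_lin B); auto.
    + apply (exd_plus (dpart l f) (fun r => c * dpart l g r)).
      * apply (proj2 (Hf l q Hl Hq)); auto.
      * apply exd_scal. apply (proj2 (Hg l q Hl Hq)); auto.
Qed.

Lemma inB p e r s i : 0 < e -> box p e r -> Rabs (s - coord i p) < e -> (i < 4)%nat -> box p e (upd i r s).
Proof. intros. apply box_upd; auto. Qed.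

Lemma zero_lt p e i : 0 < e -> Rabs (coord i p - coord i p) < e.
Proof. intros. unfold Rminus. rewrite Rplus_opp_r, Rabs_R0. auto. Qed.

Lemma rep_h U F h p e q : Hyp U F h -> (forall r, U r -> partial 0 h r = 0) -> 0 < e -> (forall r, box p e r -> U r) -> box p e q ->
  h q = partial 2 h (upd 1 p (coord 1 q)) * coord 2 q + partial 3 h (upd 1 p (coord 1 q)) * coord 3 q
     + (h (upd 1 p (coord 1 q)) - partial 2 h (upd 1 p (coord 1 q)) * coord 2 p
        - partial 3 h (upd 1 p (coord 1 q)) * coord 3 p).
Proof.
  intros HY Ha0 He Hb Hq. pose proof HY as [HU HF Hh Hpos HW].
  assert (S2 : smooth_on U (partial 2 h)) by (apply (smd U h (2::nil)%nat); auto; fa).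
  assert (S3 : smooth_on U (partial 3 h)) by (apply (smd U h (3::nil)%nat); auto; fa).
  set (q1 := upd 0 q (coord 0 p)). set (q2 := upd 2 q1 (coord 2 p)). set (q3 := upd 3 q2 (coord 3 p)).
  assert (B1 : box p e q1) by (apply inB; auto; apply zero_lt; auto).
  assert (B2 : box p e q2) by (apply inB; auto; apply zero_lt; auto).
  assert (B3 : box p e q3) by (apply inB; auto; apply zero_lt; auto).
  assert (E3 : q3 = upd 1 p (coord 1 q)) by (unfold q3, q2, q1; dpt p; dpt q; reflexivity).
  assert (Ea : h q1 = h q).
  { assert (C : forall s, Rabs (s - coord 0 p) < e -> exd h 0 (upd 0 q s) /\ partial 0 h (upd 0 q s) = 0).
    { intros s Hs. assert (U (upd 0 q s)) by (apply Hb; apply inB; auto).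
      split; [apply (smooth_exd U); auto | apply Ha0; auto]. }
    pose proof (line p e h 0 q (coord 0 p) 0 ltac:(lia) Hq (zero_lt p e 0 He) C) as L.
    unfold q1. rewrite L. ring. }
  assert (Eb : forall s, Rabs (s - coord 2 p) < e -> partial 2 h (upd 2 q1 s) = partial 2 h q1).
  { intros s Hs.
    assert (C : forall s', Rabs (s' - coord 2 p) < e -> exd (partial 2 h) 2 (upd 2 q1 s') /\
       partial 2 (partial 2 h) (upd 2 q1 s') = 0).
    { intros s' Hs'. assert (U (upd 2 q1 s')) by (apply Hb; apply inB; auto).
      split; [apply (smooth_exd U); auto | apply (hmk U F h); auto]. }
    pose proof (line p e (partial 2 h) 2 q1 s 0 ltac:(lia) B1 Hs C) as L.
    rewrite L. ring. }
  assert (Ed : partial 2 h q3 = partial 2 h q2).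
  { assert (C : forall s', Rabs (s' - coord 3 p) < e -> exd (partial 2 h) 3 (upd 3 q2 s') /\
       partial 3 (partial 2 h) (upd 3 q2 s') = 0).
    { intros s' Hs'. assert (U (upd 3 q2 s')) by (apply Hb; apply inB; auto).
      split; [apply (smooth_exd U); auto | apply (hmk U F h); auto]. }
    pose proof (line p e (partial 2 h) 3 q2 (coord 3 p) 0 ltac:(lia) B2 (zero_lt p e 3 He) C) as L.
    unfold q3. rewrite L. ring. }
  assert (Ee : h q1 = h q2 + partial 2 h q3 * (coord 2 q - coord 2 p)).
  { assert (X : q1 = upd 2 q2 (coord 2 q)) by (unfold q2, q1; dpt p; dpt q; reflexivity).
    assert (Y : coord 2 q2 = coord 2 p) by (unfold q2; apply coord_upd_same).
    assert (C : forall s, Rabs (s - coord 2 p) < e -> exd h 2 (upd 2 q2 s) /\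
       partial 2 h (upd 2 q2 s) = partial 2 h q3).
    { intros s Hs. assert (U (upd 2 q2 s)) by (apply Hb; apply inB; auto).
      split; [apply (smooth_exd U); auto|].
      rewrite Ed. unfold q2 at 1. rewrite upd_upd_same. rewrite Eb by auto.
      unfold q2. rewrite Eb; auto. apply zero_lt; auto. }
    pose proof (line p e h 2 q2 (coord 2 q) (partial 2 h q3) ltac:(lia) B2 (Hq 2%nat ltac:(lia)) C) as L.
    rewrite X at 1. rewrite L, Y. reflexivity. }
  assert (Ef : forall s, Rabs (s - coord 3 p) < e -> partial 3 h (upd 3 q3 s) = partial 3 h q3).
  { intros s Hs.
    assert (C : forall s', Rabs (s' - coord 3 p) < e -> exd (partial 3 h) 3 (upd 3 q3 s') /\
       partial 3 (partial 3 h) (upd 3 q3 s') = 0).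
    { intros s' Hs'. assert (U (upd 3 q3 s')) by (apply Hb; apply inB; auto).
      split; [apply (smooth_exd U); auto | apply (hmk U F h); auto]. }
    pose proof (line p e (partial 3 h) 3 q3 s 0 ltac:(lia) B3 Hs C) as L.
    rewrite L. ring. }
  assert (Eg : h q2 = h q3 + partial 3 h q3 * (coord 3 q - coord 3 p)).
  { assert (X : q2 = upd 3 q3 (coord 3 q)) by (unfold q3, q2, q1; dpt p; dpt q; reflexivity).
    assert (Y : coord 3 q3 = coord 3 p) by (unfold q3; apply coord_upd_same).
    assert (C : forall s, Rabs (s - coord 3 p) < e -> exd h 3 (upd 3 q3 s) /\
       partial 3 h (upd 3 q3 s) = partial 3 h q3).
    { intros s Hs. assert (U (upd 3 q3 s)) by (apply Hb; apply inB; auto).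
      split; [apply (smooth_exd U); auto| apply Ef; auto]. }
    pose proof (line p e h 3 q3 (coord 3 q) (partial 3 h q3) ltac:(lia) B3 (Hq 3%nat ltac:(lia)) C) as L.
    rewrite X at 1. rewrite L, Y. reflexivity. }
  rewrite <- E3, <- Ea, Ee, Eg. ring.
Qed.

Lemma rep_F U F h p e q : Hyp U F h -> 0 < e -> (forall r, box p e r -> U r) -> box p e q ->
  F q = partial 0 F (coord 0 p, coord 1 q, coord 2 q, coord 3 q) * coord 0 q
        + (F (coord 0 p, coord 1 q, coord 2 q, coord 3 q)
           - partial 0 F (coord 0 p, coord 1 q, coord 2 q, coord 3 q) * coord 0 p).
Proof.
  intros HY He Hb Hq. pose proof HY as [HU HF Hh Hpos HW].
  assert (S0 : smooth_on U (partial 0 F)) by (apply (smd U F (0::nil)%nat); auto; fa).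
  set (q1 := upd 0 q (coord 0 p)).
  assert (B1 : box p e q1) by (apply inB; auto; apply zero_lt; auto).
  assert (E1 : q1 = (coord 0 p, coord 1 q, coord 2 q, coord 3 q)) by (unfold q1; dpt p; dpt q; reflexivity).
  rewrite <- E1.
  assert (Eb : forall s, Rabs (s - coord 0 p) < e -> partial 0 F (upd 0 q1 s) = partial 0 F q1).
  { intros s Hs.
    assert (C : forall s', Rabs (s' - coord 0 p) < e -> exd (partial 0 F) 0 (upd 0 q1 s') /\
       partial 0 (partial 0 F) (upd 0 q1 s') = 0).
    { intros s' Hs'. assert (U (upd 0 q1 s')) by (apply Hb; apply inB; auto).
      split; [apply (smooth_exd U); auto | apply (step3 U F h); auto]. }
    pose proof (line p e (partial 0 F) 0 q1 s 0 ltac:(lia) B1 Hs C) as L.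
    rewrite L. ring. }
  assert (X : q = upd 0 q1 (coord 0 q)) by (unfold q1; rewrite upd_upd_same, upd_coord; reflexivity).
  assert (Y : coord 0 q1 = coord 0 p) by (unfold q1; apply coord_upd_same).
  assert (C : forall s, Rabs (s - coord 0 p) < e -> exd F 0 (upd 0 q1 s) /\
       partial 0 F (upd 0 q1 s) = partial 0 F q1).
  { intros s Hs. assert (U (upd 0 q1 s)) by (apply Hb; apply inB; auto).
    split; [apply (smooth_exd U); auto| apply Eb; auto]. }
  pose proof (line p e F 0 q1 (coord 0 q) (partial 0 F q1) ltac:(lia) B1 (Hq 0%nat ltac:(lia)) C) as L.
  rewrite X at 1. rewrite L, Y. ring.
Qed.

Theorem lemma3p2 (U : pt -> Prop) (F h : pt -> R) :
  is_open U ->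
  smooth_on U F ->
  smooth_on U h ->
  (forall p, U p -> 0 < h p) ->
  (* h is not constant on any nonempty open subset *)
  (forall V : pt -> Prop, is_open V -> (exists p, V p) -> (forall p, V p -> U p) ->
     ~ (exists c, forall p, V p -> h p = c)) ->
  (* (M,g) is non-flat: the curvature does not vanish identically on any nonempty open subset *)
  (forall V : pt -> Prop, is_open V -> (exists p, V p) -> (forall p, V p -> U p) ->
     ~ flat_on (prwave F) (prwave_inv F) V) ->
  (* vacuum weighted Einstein field equations G^h = 0 *)
  (forall p, U p -> forall i j, (i < 4)%nat -> (j < 4)%nat ->
     weinstein (prwave F) (prwave_inv F) h i j p = 0) ->
  (forall p, U p -> nilpotent (fun i j => ricci_op (prwave F) (prwave_inv F) i j p)) /\
  (forall p, U p -> exists eps, 0 < eps /\ (forall q, box p eps q -> U q) /\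
     exists (hx hy h0 : R -> R) (F1 F0 : R -> R -> R -> R),
       smooth_on (box p eps) (fun q => hx (coord 1 q)) /\
       smooth_on (box p eps) (fun q => hy (coord 1 q)) /\
       smooth_on (box p eps) (fun q => h0 (coord 1 q)) /\
       smooth_on (box p eps) (fun q => F1 (coord 1 q) (coord 2 q) (coord 3 q)) /\
       smooth_on (box p eps) (fun q => F0 (coord 1 q) (coord 2 q) (coord 3 q)) /\
       forall q, box p eps q ->
         h q = hx (coord 1 q) * coord 2 q + hy (coord 1 q) * coord 3 q + h0 (coord 1 q) /\
         F q = F1 (coord 1 q) (coord 2 q) (coord 3 q) * coord 0 q
               + F0 (coord 1 q) (coord 2 q) (coord 3 q)).
Proof.
  intros HU HF Hh Hpos Hnc NF HW.
  assert (HY : Hyp U F h) by (constructor; auto).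
  split.
  - intros p Hp. apply nil_pt. apply (exF_of U); auto. apply (step3 U F h p HY Hp).
  - intros p Hp. destruct (HU p Hp) as [e [He Hb]].
    exists e. split; [exact He|split; [exact Hb|]].
    assert (Ha0 : forall r, U r -> partial 0 h r = 0) by (intros r Hr; apply (step5 U F h r HY NF Hr)).
    set (k1 := fun i => Nat.eqb i 1). set (k0 := fun i => negb (Nat.eqb i 0)).
    assert (P1 : forall q, proj k1 p q = upd 1 p (coord 1 q)) by (intros q; dpt p; dpt q; reflexivity).
    assert (P0 : forall q, proj k0 p q = (coord 0 p, coord 1 q, coord 2 q, coord 3 q))
      by (intros q; dpt p; dpt q; reflexivity).
    assert (HBU : forall k q, box p e q -> U (proj k p q)) by (intros k q Hq; apply Hb; apply proj_box; auto).
    assert (S2 : smooth_on U (partial 2 h)) by (apply (smd U h (2::nil)%nat); auto; fa).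
    assert (S3 : smooth_on U (partial 3 h)) by (apply (smd U h (3::nil)%nat); auto; fa).
    assert (S0 : smooth_on U (partial 0 F)) by (apply (smd U F (0::nil)%nat); auto; fa).
    assert (SP : forall f k, smooth_on U f -> smooth_on (box p e) (fun q => f (proj k p q)))
      by (intros f k Hf; apply (smooth_proj U); auto).
    exists (fun v => partial 2 h (upd 1 p v)), (fun v => partial 3 h (upd 1 p v)),
      (fun v => h (upd 1 p v) - partial 2 h (upd 1 p v) * coord 2 p - partial 3 h (upd 1 p v) * coord 3 p),
      (fun v x y => partial 0 F (coord 0 p, v, x, y)),
      (fun v x y => F (coord 0 p, v, x, y) - partial 0 F (coord 0 p, v, x, y) * coord 0 p).
    split; [|split; [|split; [|split; [|split]]]].
    + apply (smooth_ext _ (fun q => partial 2 h (proj k1 p q))); [intros; rewrite P1; reflexivity|]. auto.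
    + apply (smooth_ext _ (fun q => partial 3 h (proj k1 p q))); [intros; rewrite P1; reflexivity|]. auto.
    + apply (smooth_ext _ (fun r => (fun r => h (proj k1 p r) + (- coord 2 p) * partial 2 h (proj k1 p r)) r
                                    + (- coord 3 p) * partial 3 h (proj k1 p r))).
      { intros; rewrite P1; ring. }
      apply smooth_lin; [apply box_open| |auto].
      apply smooth_lin; [apply box_open|auto|auto].
    + apply (smooth_ext _ (fun q => partial 0 F (proj k0 p q))); [intros; rewrite P0; reflexivity|]. auto.
    + apply (smooth_ext _ (fun r => F (proj k0 p r) + (- coord 0 p) * partial 0 F (proj k0 p r))).
      { intros; rewrite P0; ring. }
      apply smooth_lin; [apply box_open|auto|auto].
    + intros q Hq. split.
      * apply (rep_h U F h p e q HY Ha0 He Hb Hq).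
      * apply (rep_F U F h p e q HY He Hb Hq).
Qed.
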